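(* $\mathrm{1N}\not\subseteq\mathrm{1DPD}$.
   Context: A family of promise decision problems over a fixed alphabet $\Sigma$ is $\mathcal{L}=\{(L^{(+)}_n,L^{(-)}_n)\}_{n\in\mathbb{N}}$ with $L^{(+)}_n,L^{(-)}_n\subseteq\Sigma^*$ disjoint; a family of machines $\{M_n\}_n$ solves it if each $M_n$ accepts every $x\in L^{(+)}_n$ and rejects every $x\in L^{(-)}_n$ (no uniformity is required). A 1dpda is a one-way deterministic pushdown automaton with state set $Q$, endmarked input, stack alphabet $\Gamma$ and push size $e$ (each move replaces the top stack symbol by a string in $\Gamma^{\le e}$), with accepting and rejecting halting states; its stack-state complexity is $|Q|+|\Gamma^{\le e}|$. $\mathrm{1DPD}$ is the class of families of promise problems solvable by families of 1dpda's whose stack-state complexity is bounded by a fixed polynomial in $n$. $\mathrm{1N}$ is the class of families of promise problems solvable by families of one-way nondeterministic finite automata whose number of states is bounded by a fixed polynomial in $n$. *)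

(* Defs.v *)
From mathcomp Require Import all_boot.
Set Implicit Arguments. Unset Strict Implicit. Unset Printing Implicit Defensive.

Inductive tsym (Sigma : Type) : Type :=
  | Cent : tsym Sigma
  | Dollar : tsym Sigma
  | Sym : Sigma -> tsym Sigma.
Arguments Cent {Sigma}. Arguments Dollar {Sigma}.

Definition tape (Sigma : Type) (x : seq Sigma) : seq (tsym Sigma) :=
  Cent :: map (@Sym Sigma) x ++ [:: Dollar].

(* A promise problem: (positive instances, negative instances). *)
Definition promise (Sigma : Type) := ((seq Sigma -> Prop) * (seq Sigma -> Prop))%type.

Definition promise_disjoint (Sigma : Type) (P : promise Sigma) : Prop :=
  forall x, P.1 x -> P.2 x -> False.

Record nfa (Sigma : Type) := Nfa {
  nfa_ns : nat;
  nfa_q0 : 'I_nfa_ns;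
  nfa_fin : pred 'I_nfa_ns;
  nfa_trans : 'I_nfa_ns -> tsym Sigma -> 'I_nfa_ns -> bool }.

Arguments nfa_trans {Sigma} n _ _ _ : rename.
Arguments nfa_fin {Sigma} n _ : rename.
Definition nfa_next (Sigma : Type) (M : nfa Sigma) (S : {set 'I_(nfa_ns M)})
  (a : tsym Sigma) : {set 'I_(nfa_ns M)} :=
  [set q' | [exists q in S, nfa_trans M q a q']].

Definition nfa_accepts (Sigma : Type) (M : nfa Sigma) (x : seq Sigma) : Prop :=
  exists2 q, q \in foldl (@nfa_next Sigma M) [set nfa_q0 M] (tape x) & nfa_fin M q.

Definition nfa_rejects (Sigma : Type) (M : nfa Sigma) (x : seq Sigma) : Prop :=
  ~ nfa_accepts M x.

(* states 'I_nq, stack alphabet 'I_ng, push size e; a transition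
   delta q (Some a) g  reads tape symbol a, delta q None g is a lambda-move;
   it replaces the top stack symbol g by a string of length <= e. *)
Record dpda (Sigma : Type) := Dpda {
  pd_nq : nat;
  pd_ng : nat;
  pd_e : nat;
  pd_q0 : 'I_pd_nq;
  pd_z0 : 'I_pd_ng;
  pd_acc : pred 'I_pd_nq;
  pd_rej : pred 'I_pd_nq;
  pd_delta : 'I_pd_nq -> option (tsym Sigma) -> 'I_pd_ng ->
             option ('I_pd_nq * seq 'I_pd_ng);
  pd_halt_disj : forall q, ~~ (pd_acc q && pd_rej q);
  pd_push : forall q a g q' w, pd_delta q a g = Some (q', w) -> size w <= pd_e;
  pd_det : forall q g, pd_delta q None g <> None ->
             forall a, pd_delta q (Some a) g = None }.

Arguments pd_delta {Sigma} d _ _ _ : rename.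
Arguments pd_acc {Sigma} d _ : rename.
Arguments pd_rej {Sigma} d _ : rename.

(* stack-state complexity |Q| + |Gamma^{<= e}| *)
Definition pd_ssc (Sigma : Type) (M : dpda Sigma) : nat :=
  pd_nq M + \sum_(i < (pd_e M).+1) pd_ng M ^ i.

Definition pd_config (Sigma : Type) (M : dpda Sigma) :=
  ('I_(pd_nq M) * seq (tsym Sigma) * seq 'I_(pd_ng M))%type.

Definition pd_step (Sigma : Type) (M : dpda Sigma) (c : pd_config M)
  : option (pd_config M) :=
  let: (q, t, s) := c in
  if pd_acc M q || pd_rej M q then None else
  match s with
  | [::] => None
  | g :: s' =>
    match pd_delta M q None g with
    | Some (q', w) => Some (q', t, w ++ s')
    | None =>
      match t with
      | [::] => None
      | a :: t' =>
        match pd_delta M q (Some a) g with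
        | Some (q', w) => Some (q', t', w ++ s')
        | None => None
        end
      end
    end
  end.

Fixpoint pd_run (Sigma : Type) (M : dpda Sigma) (k : nat) (c : pd_config M)
  : option (pd_config M) :=
  match k with
  | 0 => Some c
  | k'.+1 => match @pd_step Sigma M c with
             | Some c' => @pd_run Sigma M k' c'
             | None => None
             end
  end.

Definition pd_init (Sigma : Type) (M : dpda Sigma) (x : seq Sigma) : pd_config M :=
  (pd_q0 M, tape x, [:: pd_z0 M]).

Definition dpda_accepts (Sigma : Type) (M : dpda Sigma) (x : seq Sigma) : Prop :=
  exists k (c : pd_config M), @pd_run Sigma M k (pd_init M x) = Some c /\ pd_acc M c.1.1.

Definition dpda_rejects (Sigma : Type) (M : dpda Sigma) (x : seq Sigma) : Prop :=
  exists k (c : pd_config M), @pd_run Sigma M k (pd_init M x) = Some c /\ pd_rej M c.1.1.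

(* "bounded by a fixed polynomial in n" is rendered as  <= c * (n+1)^c. *)
Definition in_1N (Sigma : Type) (L : nat -> promise Sigma) : Prop :=
  exists (c : nat) (M : nat -> nfa Sigma),
    forall n, nfa_ns (M n) <= c * n.+1 ^ c /\
      (forall x, (L n).1 x -> nfa_accepts (M n) x) /\
      (forall x, (L n).2 x -> nfa_rejects (M n) x).

Definition in_1DPD (Sigma : Type) (L : nat -> promise Sigma) : Prop :=
  exists (c : nat) (M : nat -> dpda Sigma),
    forall n, pd_ssc (M n) <= c * n.+1 ^ c /\
      (forall x, (L n).1 x -> dpda_accepts (M n) x) /\
      (forall x, (L n).2 x -> dpda_rejects (M n) x).

(* Main.v *)
Require Import Defs.
From mathcomp Require Import all_boot zify.
From Stdlib Require Import IndefiniteDescription.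
Set Implicit Arguments. Unset Strict Implicit. Unset Printing Implicit Defensive.

Section DPDA.
Variables (Sigma : Type) (M : dpda Sigma).
Local Notation cfg := (pd_config M).
Local Notation run := (@pd_run Sigma M).
Local Notation step := (@pd_step Sigma M).

Lemma run_add k1 k2 (c : cfg) : run (k1 + k2) c = obind (run k2) (run k1 c).
Proof.
elim: k1 c => [|k1 IH] c; first by [].
rewrite addSn /=. case: (step c) => //.
Qed.

Lemma run1 (c : cfg) : run 1 c = step c.
Proof. by rewrite /=; case: (step c). Qed.

Lemma runS k (c : cfg) : run k.+1 c = obind step (run k c).
Proof. by rewrite -addn1 run_add; case: (run k c) => //= c'; case: (step c'). Qed.

Lemma run_succ k (c : cfg) : run k.+1 c = obind (run k) (step c).
Proof. by rewrite -add1n run_add run1. Qed.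

Lemma step_nil q t : step (q, t, [::]) = None.
Proof. by rewrite /pd_step; case: (_ || _). Qed.

Lemma step_frame q u s q' u' s' rest beta :
  step (q, u, s) = Some (q', u', s') ->
  step (q, u ++ rest, s ++ beta) = Some (q', u' ++ rest, s' ++ beta).
Proof.
rewrite /pd_step. case: (_ || _) => //. case: s => [|g s] //=.
case: (pd_delta M q None g) => [[q1 w]|].
  by case => <- <- <-; rewrite catA.
case: u => [|a u] //=.
case: (pd_delta M q (Some a) g) => [[q1 w]|] //.
by case => <- <- <-; rewrite catA.
Qed.

Lemma step_unframe q u s q' v s2 rest beta :
  step (q, u ++ rest, s ++ beta) = Some (q', v, s2) -> s != [::] ->
  size rest <= size v ->
  exists u' s', [/\ v = u' ++ rest, s2 = s' ++ beta &
                   step (q, u, s) = Some (q', u', s')].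
Proof.
rewrite /pd_step. case: (_ || _) => //. case: s => [|g s] //= + _.
case: (pd_delta M q None g) => [[q1 w]|].
  by case => <- <- <- _; exists u, (w ++ s); rewrite catA.
case: u => [|a u] /=.
  case: rest => [|a r] //=.
  case: (pd_delta M q (Some a) g) => [[q1 w]|] //.
  by case => _ <- _; rewrite ltnn.
case: (pd_delta M q (Some a) g) => [[q1 w]|] //.
by case => <- <- <- _; exists u, (w ++ s); rewrite catA.
Qed.

Lemma step_tape (c c' : cfg) : step c = Some c' ->
  exists2 i, i <= 1 & c'.1.2 = drop i c.1.2.
Proof.
case: c => [[q t] s]. rewrite /pd_step. case: (_ || _) => //.
case: s => [|g s] //=.
case: (pd_delta M q None g) => [[q1 w]|].
  by case => <-; exists 0; rewrite ?drop0.
case: t => [|a t] //=.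
case: (pd_delta M q (Some a) g) => [[q1 w]|] //.
by case => <-; exists 1; rewrite //= drop0.
Qed.

Lemma step_stack q t s (c' : cfg) : step (q, t, s) = Some c' ->
  exists g s0 w, [/\ s = g :: s0, c'.2 = w ++ s0 & size w <= pd_e M].
Proof.
rewrite /pd_step. case: (_ || _) => //.
case: s => [|g s] //=.
case E: (pd_delta M q None g) => [[q1 w]|].
  by case => <-; exists g, s, w; split => //; apply: pd_push E.
case: t => [|a t] //=.
case E2: (pd_delta M q (Some a) g) => [[q1 w]|] //.
by case => <-; exists g, s, w; split => //; apply: pd_push E2.
Qed.

Lemma run_tape k (c c' : cfg) : run k c = Some c' ->
  exists i, c'.1.2 = drop i c.1.2.
Proof.
elim: k c => [|k IH] c.
  by case => <-; exists 0; rewrite drop0.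
rewrite run_succ.
case E: (step c) => [c1|] //= H.
have [j _ Hj] := step_tape E.
have [i Hi] := IH _ H.
by exists (i + j); rewrite Hi Hj drop_drop.
Qed.

Lemma run_frame k q u s q' u' s' rest beta :
  run k (q, u, s) = Some (q', u', s') ->
  run k (q, u ++ rest, s ++ beta) = Some (q', u' ++ rest, s' ++ beta).
Proof.
elim: k q u s => [|k IH] q u s.
  by case => <- <- <-.
rewrite !run_succ.
case E: (step (q, u, s)) => [[[q1 u1] s1]|] // H; rewrite /= in H.
by rewrite (step_frame rest beta E) /= (IH _ _ _ H).
Qed.

Lemma run_unframe k q u rest s beta (c : cfg) :
  run k (q, u ++ rest, s ++ beta) = Some c ->
  (forall i (c' : cfg), i < k -> run i (q, u ++ rest, s ++ beta) = Some c' ->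
        size beta < size c'.2) ->
  size rest <= size c.1.2 ->
  exists u' s', c = (c.1.1, u' ++ rest, s' ++ beta) /\
                run k (q, u, s) = Some (c.1.1, u', s').
Proof.
elim: k q u s => [|k IH] q u s.
  by case => <- _ _; exists u, s.
rewrite run_succ.
case E: (step (q, u ++ rest, s ++ beta)) => [[[q1 v1] s1]|] // Hrun Hint Hsz; rewrite /= in Hrun.
have hs : s != [::].
  move: (Hint 0 _ (ltn0Sn k) erefl) => /=.
  by case: (s) => //=; rewrite ltnn.
have Hv : size rest <= size v1.
  have [i Hi] := run_tape Hrun.
  by apply: leq_trans Hsz _; rewrite Hi size_drop leq_subr.
have [u1 [s1' [Ev Es Estep]]] := step_unframe E hs Hv.
subst v1 s1.
have Hint' : forall i (c' : cfg), i < k -> run i (q1, u1 ++ rest, s1' ++ beta) = Some c' ->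
        size beta < size c'.2.
  by move=> i c' Hi Hc; apply: (Hint i.+1) => //; rewrite run_succ E.
have [u' [s' [Ec Hloc]]] := IH _ _ _ Hrun Hint' Hsz.
by exists u', s'; split => //; rewrite run_succ Estep.
Qed.

Lemma run_halt k (c c1 : cfg) : run k c = Some c1 ->
  pd_acc M c1.1.1 || pd_rej M c1.1.1 ->
  forall k2 c2, run k2 c = Some c2 -> k <= k2 -> c2 = c1.
Proof.
move=> H1 Hh k2 c2 H2 Hle.
move: H2; rewrite -(subnKC Hle) run_add H1 /=.
case: (k2 - k) => [|d] /=; first by case.
move: Hh; case: c1 {H1} => [[q t] s] /= Hh.
by rewrite /pd_step Hh.
Qed.

Lemma run_acc_rej k1 k2 (c c1 c2 : cfg) :
  run k1 c = Some c1 -> pd_rej M c1.1.1 ->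
  run k2 c = Some c2 -> pd_acc M c2.1.1 -> False.
Proof.
move=> H1 R1 H2 A2.
have := pd_halt_disj (c1.1.1).
case: (leqP k1 k2) => Hk.
  have E := run_halt H1 (introT orP (or_intror R1)) H2 Hk.
  by subst c2; rewrite A2 R1.
have E := run_halt H2 (introT orP (or_introl A2)) H1 (ltnW Hk).
by subst c1; rewrite A2 R1.
Qed.

Lemma run_stack_pos k (c c' c'' : cfg) i : run k c = Some c' -> i < k ->
  run i c = Some c'' -> 0 < size c''.2.
Proof.
move=> Hk Hi Hc.
move: Hk; rewrite -(subnKC (ltnW Hi)) run_add Hc /=.
case: (k - i) (subn_gt0 i k) => [|d]; first by rewrite Hi.
move=> _ /=; case: c'' {Hc} => [[q t] [|g s]] //=.
by case: (_ || _).
Qed.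

Lemma run_prefix k q u rest s q' s' rest' :
  run k (q, u ++ rest, s) = Some (q', rest, s') ->
  run k (q, u ++ rest', s) = Some (q', rest', s').
Proof.
move=> H.
have := @run_unframe k q u rest s [::] (q', rest, s').
rewrite !cats0 => /(_ H) [].
  by move=> i c' Hi Hc; apply: run_stack_pos H Hi Hc.
  by [].
move=> u1 [s1 [[Eu Es] Hloc]].
have Eu1 : u1 = [::].
  by move: (congr1 size Eu); rewrite size_cat; case: (u1) => //= a l; lia.
subst u1; rewrite cats0 in Es; subst s1.
by have := run_frame rest' [::] Hloc; rewrite !cats0.
Qed.

End DPDA.

Section Comb.
Variables (h P : nat -> nat) (T e n : nat).
Hypothesis hpos : forall t, t < T -> 0 < h t.
Hypothesis hup : forall t, t < T -> h t.+1 < h t + e.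
Hypothesis hdown : forall t, t < T -> h t <= (h t.+1).+1.
Hypothesis Pup : forall t, t < T -> P t <= P t.+1 <= (P t).+1.
Hypothesis P0 : P 0 = 0.
Hypothesis h0 : h 0 = 1.
Hypothesis n4 : 4 <= n.

Definition good r t := forall x, r <= x <= t -> h r < h x + e /\ h t < h x + e.

Lemma Pmono r t : r <= t -> t <= T -> P r <= P t.
Proof.
move=> Hrt; elim: t Hrt => [|t IH] Hrt HtT.
  by have -> : r = 0 by lia.
case: (leqP r t) => Hr.
  have := Pup (t:=t) HtT; have := IH Hr (ltnW HtT); lia.
by have -> : r = t.+1 by lia.
Qed.

Lemma first_min lo hi : lo <= hi -> exists mu, [/\ lo <= mu <= hi,
  forall x, lo <= x <= hi -> h mu <= h x & forall x, lo <= x < mu -> h mu < h x].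
Proof.
elim: hi => [|hi IH] Hle.
  have E : lo = 0 by lia.
  subst lo; exists 0; split; [by [] | move=> x Hx | move=> x Hx; lia].
  by have -> : x = 0 by lia.
case: (leqP lo hi) => H.
  have [mu [Hmu Hmin Hfirst]] := IH H.
  case: (ltnP (h hi.+1) (h mu)) => Hc.
    exists hi.+1; split; first lia.
      move=> x Hx; case: (leqP x hi) => Hx2; last by have -> : x = hi.+1 by lia.
      have := Hmin x; lia.
    move=> x Hx; have := Hmin x; lia.
  exists mu; split; first lia.
    move=> x Hx; case: (leqP x hi) => Hx2; first by apply: Hmin; lia.
    by have -> : x = hi.+1 by lia.
  by [].
have E : lo = hi.+1 by lia.
subst lo; exists hi.+1; split; [lia | move=> x Hx | move=> x Hx; lia].
by have -> : x = hi.+1 by lia.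
Qed.

Lemma inner d r t : t - r <= d -> r <= t -> t < T -> good r t -> n.+2 <= P t - P r ->
  exists r' t', [/\ r' <= t', t' < T, good r' t' & n.+2 <= P t' - P r' <= 3 * n].
Proof.
elim: d r t => [|d IH] r t Hd Hrt HtT Hg HP.
  have E : t = r by lia.
  subst t; lia.
case: (leqP (P t - P r) (3 * n)) => H3.
  by exists r, t; split => //; apply/andP.
have Hlt : r < t.
  case: (ltnP r t) => // H; have E : t = r by lia.
  subst t; lia.
have [mu [Hmu Hmin Hfirst]] := first_min Hrt.
have e1 : 0 < e by have [] := Hg r; lia.
have Pr_mu : P r <= P mu by apply: Pmono; lia.
have Pmu_t : P mu <= P t by apply: Pmono; lia.
case: (eqVneq mu r) => Emu.
  subst mu.
  apply: (IH r.+1 t) => //; try lia.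
    move=> x Hx; split; last by have [] := Hg x; lia.
    have := hup (t:=r) (ltn_trans Hlt HtT); have := Hmin x; lia.
  have := Pup (t:=r) (ltn_trans Hlt HtT); lia.
case: (eqVneq mu t) => Emu2.
  subst mu.
  have Et : t = t.-1.+1 by lia.
  have Ht1 : t.-1 < T by lia.
  apply: (IH r t.-1); try lia.
    move=> x Hx; split; first by have [] := Hg x; lia.
    have := hdown (t:=t.-1) Ht1.
    rewrite -Et; have := Hfirst x; lia.
  have := Pup (t:=t.-1) Ht1; rewrite -Et; lia.
case: (leqP n.+2 (P mu - P r)) => Hbig.
  apply: (IH r mu) => //; try lia.
  move=> x Hx; split; first by have [] := Hg x; lia.
  have := Hmin x; lia.
apply: (IH mu t) => //; try lia.
move=> x Hx; split; first by have := Hmin x; lia.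
have [] := Hg x; lia.
Qed.

Definition OpenC := exists rho, [/\ rho <= T, n < P rho <= 3 * n + 1 &
  forall x, rho <= x < T -> h rho <= h x].
Definition ClosedC := exists r t, [/\ r <= t, t < T, good r t & n.+2 <= P t - P r <= 3 * n].

Lemma outer d rho : T - rho <= d -> rho <= T -> (forall x, rho <= x < T -> h rho <= h x) ->
  P rho <= n -> n < P T -> OpenC \/ ClosedC.
Proof.
elim: d rho => [|d IH] rho Hd HrT Hmin HPn HPT.
  have E : rho = T by lia.
  subst; lia.
case: (ltnP rho.+1 T) => Hr.
  have Hle : rho.+1 <= T.-1 by lia.
  have [mu [Hmu Hmin' Hfirst]] := first_min Hle.
  have Rmu : forall x, mu <= x < T -> h mu <= h x.
    by move=> x Hx; apply: Hmin'; lia.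
  case: (leqP (P mu) n) => Hpm.
    by apply: (IH mu) => //; lia.
  case: (leqP (P mu) (3 * n + 1)) => Hpm2.
    by left; exists mu; split => //; [lia | apply/andP].
  right.
  have e1 : 0 < e.
    have := hup (t:=rho) (ltnW Hr); have := Hmin rho.+1; lia.
  have Prho : P rho <= P mu by apply: Pmono; lia.
  apply: (inner (d:= mu - rho)) => //; try lia.
  move=> x Hx; split; first by have := Hmin x; lia.
  case: (eqVneq x rho) => Ex.
    subst x; have := hup (t:=rho) (ltnW Hr); have := Hmin' rho.+1; lia.
  have := Hmin' x; lia.
case: (eqVneq rho T) => ErT.
  subst; lia.
have E : T = rho.+1 by lia.
left; exists T; split => //.
  have := Pup (t:=rho); rewrite -E; lia.
move=> x Hx; lia.
Qed.

Lemma comb_main : P T <= n \/ OpenC \/ ClosedC.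
Proof.
case: (leqP (P T) n) => H; first by left.
right; apply: (outer (d:=T) (rho:=0)) => //; try lia.
move=> x Hx; rewrite h0; apply: hpos; lia.
Qed.

End Comb.
Section Trace.
Variables (Sigma : Type) (M : dpda Sigma) (C0 : pd_config M) (T : nat) (cf : pd_config M).
Local Notation run := (@pd_run Sigma M).
Local Notation step := (@pd_step Sigma M).
Hypothesis HT : run T C0 = Some cf.

Definition cfgt t := odflt C0 (run t C0).
Definition ht t := size (cfgt t).2.
Definition Pt t := size C0.1.2 - size (cfgt t).1.2.

Lemma cfgtE t : t <= T -> run t C0 = Some (cfgt t).
Proof.
move=> Ht; move: HT; rewrite -(subnKC Ht) run_add /cfgt.
by case: (run t C0).
Qed.

Lemma cfgtT : cfgt T = cf.
Proof. by have := cfgtE (leqnn T); rewrite HT; case. Qed.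

Lemma cfgt0 : cfgt 0 = C0.
Proof. by []. Qed.

Lemma step_t t : t < T -> step (cfgt t) = Some (cfgt t.+1).
Proof. by move=> Ht; have := cfgtE Ht; rewrite runS (cfgtE (ltnW Ht)). Qed.

Lemma seg_run r t : r <= t -> t <= T -> run (t - r) (cfgt r) = Some (cfgt t).
Proof.
move=> Hrt HtT; have := cfgtE HtT.
by rewrite -{1}(subnKC Hrt) run_add (cfgtE (leq_trans Hrt HtT)).
Qed.

Lemma seg_mid r i c : r + i <= T -> run i (cfgt r) = Some c -> c = cfgt (r + i).
Proof.
move=> H Hc; have := cfgtE H.
rewrite run_add (cfgtE (leq_trans (leq_addr i r) H)) /= Hc.
by case.
Qed.

Lemma ht_pos t : t < T -> 0 < ht t.
Proof.
move=> Ht; have := step_t Ht; rewrite /ht.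
case: (cfgt t) => [[q tp] s] /= /step_stack [g [s0 [w [-> _ _]]]] //.
Qed.

Lemma ht_up t : t < T -> ht t.+1 < ht t + pd_e M.
Proof.
move=> Ht; have := step_t Ht; rewrite /ht.
case: (cfgt t) => [[q tp] s] /= /step_stack [g [s0 [w [-> -> Hw]]]].
rewrite size_cat /=; lia.
Qed.

Lemma ht_down t : t < T -> ht t <= (ht t.+1).+1.
Proof.
move=> Ht; have := step_t Ht; rewrite /ht.
case: (cfgt t) => [[q tp] s] /= /step_stack [g [s0 [w [-> -> Hw]]]].
rewrite size_cat /=; lia.
Qed.

Lemma drop_size_eq (A : Type) (s : seq A) i : drop i s = drop (size s - size (drop i s)) s.
Proof.
rewrite size_drop; case: (leqP i (size s)) => H; first by rewrite subKn.
by rewrite !drop_oversize //; lia.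
Qed.

Lemma tape_drop t : t <= T -> (cfgt t).1.2 = drop (Pt t) C0.1.2.
Proof.
move=> Ht; have [i Hi] := run_tape (cfgtE Ht).
by rewrite /Pt Hi -drop_size_eq.
Qed.

Lemma Pt_up t : t < T -> Pt t <= Pt t.+1 <= (Pt t).+1.
Proof.
move=> Ht; have [j Hj Ej] := step_tape (step_t Ht).
have E := tape_drop (ltnW Ht).
rewrite /Pt Ej E !size_drop; lia.
Qed.

Lemma Pt0 : Pt 0 = 0.
Proof. by rewrite /Pt subnn. Qed.

Lemma Pt_le t : Pt t <= size C0.1.2.
Proof. exact: leq_subr. Qed.

Lemma Pt_leT t : t <= T -> Pt t <= t.
Proof.
elim: t => [|t IH] Ht; first by rewrite Pt0.
have := Pt_up Ht; have := IH (ltnW Ht); lia.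
Qed.

End Trace.
Definition xw (w : seq bool) : seq bool := flatten (nseq 4 w).
Definition posL n (x : seq bool) : Prop :=
  exists i j, [/\ i < j, j < size x, n %| j - i & nth false x i != nth false x j].
Definition negL n (x : seq bool) : Prop := exists w, size w = n /\ x = xw w.
Definition Lfam n : promise bool := (posL n, negL n).

Lemma xwE w : xw w = w ++ w ++ w ++ w.
Proof. by rewrite /xw /= cats0. Qed.

Lemma size_xw w : size (xw w) = 4 * size w.
Proof. rewrite xwE !size_cat; lia. Qed.

Lemma nth_flat k (w : seq bool) d : d < k * size w ->
  nth false (flatten (nseq k w)) d = nth false w (d %% size w).
Proof.
elim: k d => [|k IH] d Hd; first by rewrite mul0n in Hd.
rewrite /= nth_cat; case: (ltnP d (size w)) => H; first by rewrite modn_small.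
rewrite IH; last by rewrite mulSn in Hd; lia.
by rewrite -{2}(subnK H) modnDr.
Qed.

Lemma nth_xw w d : d < 4 * size w -> nth false (xw w) d = nth false w (d %% size w).
Proof. exact: nth_flat. Qed.

Lemma Lfam_disj n : promise_disjoint (Lfam n).
Proof.
move=> x [i [j [Hij Hj Hdvd Hne]]] [w [Hw Ex]].
subst x; move: Hne; rewrite size_xw in Hj.
rewrite !nth_xw; try lia.
have : (j == i %[mod size w]) by rewrite eqn_mod_dvd ?Hw //; lia.
by move/eqP => ->; rewrite eqxx.
Qed.

Lemma nth_splice (A : Type) (X Y : seq A) (d0 : A) a b i :
  size X = size Y -> a <= b -> b <= size X ->
  nth d0 (take a X ++ take (b - a) (drop a Y) ++ drop b X) i =
  if (a <= i) && (i < b) then nth d0 Y i else nth d0 X i.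
Proof.
move=> Hs Hab Hb.
rewrite nth_cat size_takel; last lia.
case: (ltnP i a) => Hia.
  by rewrite nth_take //; case: ifP => Hc //; exfalso; lia.
rewrite nth_cat size_takel; last by rewrite size_drop; lia.
case: (ltnP (i - a) (b - a)) => Hib.
  rewrite nth_take // nth_drop; case: ifP => Hc; last by exfalso; lia.
  by rewrite subnKC.
rewrite nth_drop; case: ifP => Hc; first by exfalso; lia.
by congr nth; lia.
Qed.

Lemma size_tape (x : seq bool) : size (tape x) = (size x).+2.
Proof. by rewrite /tape /= size_cat size_map addn1. Qed.

Lemma nth_tape (x : seq bool) i : nth Dollar (tape x) i =
  if i == 0 then Cent else if i <= size x then Sym (nth false x i.-1) else Dollar.
Proof.
case: i => [|i] //=; rewrite nth_cat size_map.
case: (ltnP i (size x)) => H; first by rewrite (nth_map false).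
by move: (i - size x) => [|m] //=; rewrite nth_nil.
Qed.

Definition hyb (x x' : seq bool) a b :=
  mkseq (fun d => if (a <= d.+1) && (d.+1 < b) then nth false x' d else nth false x d) (size x).

Lemma tape_hyb (x x' : seq bool) a b : size x = size x' -> a <= b -> b <= (size x).+2 ->
  take a (tape x) ++ take (b - a) (drop a (tape x')) ++ drop b (tape x) = tape (hyb x x' a b).
Proof.
move=> Hs Hab Hb.
apply: (@eq_from_nth _ Dollar).
  rewrite !size_cat size_takel ?size_tape //; last lia.
  rewrite size_takel ?size_drop ?size_tape ?size_mkseq -?Hs; lia.
move=> i Hi.
rewrite nth_splice ?size_tape //; last by rewrite -Hs.
rewrite !nth_tape size_mkseq -Hs.
case: eqP => Hi0; first by case: ifP.
case: (leqP i (size x)) => Hix; last by case: ifP.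
rewrite nth_mkseq; last lia.
have -> : i.-1.+1 = i by lia.
by case: ifP.
Qed.

Lemma exists_diff (w w' : seq bool) : size w = size w' -> w != w' ->
  exists2 k, k < size w & nth false w k != nth false w' k.
Proof.
move=> Hs Hne.
have : ~~ [forall k : 'I_(size w), nth false w k == nth false w' k].
  apply/negP => /forallP H; move: Hne.
  by rewrite (eq_from_nth (x0:=false) Hs (fun i Hi => eqP (H (Ordinal Hi)))) eqxx.
by rewrite negb_forall => /existsP [k Hk]; exists k.
Qed.

Lemma hyb_pos n (w w' : seq bool) a b : size w = n -> size w' = n -> w != w' ->
  (forall k, k < n -> exists d1 d2, [/\ d1 < 4 * n, d2 < 4 * n, d1 %% n = k, d2 %% n = k &
      ((a <= d1.+1) && (d1.+1 < b)) && ~~ ((a <= d2.+1) && (d2.+1 < b))]) ->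
  posL n (hyb (xw w) (xw w') a b).
Proof.
move=> Hw Hw' Hne HW.
have [k Hk Hdiff] := exists_diff (etrans Hw (esym Hw')) Hne.
rewrite Hw in Hk.
have [d1 [d2 [H1 H2 R1 R2 /andP [In1 In2]]]] := HW k Hk.
have E1 : nth false (hyb (xw w) (xw w') a b) d1 = nth false w' k.
  by rewrite nth_mkseq ?size_xw ?Hw // In1 nth_xw ?Hw' ?R1 //.
have E2 : nth false (hyb (xw w) (xw w') a b) d2 = nth false w k.
  by rewrite nth_mkseq ?size_xw ?Hw // (negbTE In2) nth_xw ?Hw ?R2 //.
have Hsz : size (hyb (xw w) (xw w') a b) = 4 * n by rewrite size_mkseq size_xw Hw.
have Hd : d1 != d2 by apply/eqP => E; subst d2; rewrite In1 in In2.
rewrite /posL; case: (ltnP d1 d2) => Hlt.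
  exists d1, d2; split => //; first by rewrite Hsz.
    by rewrite -eqn_mod_dvd ?R1 ?R2 //; apply: ltnW.
  by rewrite E1 E2 eq_sym.
have Hlt' : d2 < d1 by rewrite ltn_neqAle Hlt andbT eq_sym.
exists d2, d1; split => //; first by rewrite Hsz.
  by rewrite -eqn_mod_dvd ?R1 ?R2 //; apply: ltnW.
by rewrite E1 E2.
Qed.

Lemma res_in_range n lo k : 0 < n -> k < n -> exists d, lo <= d < lo + n /\ d %% n = k.
Proof.
move=> Hn Hk.
have Hdq := divn_eq lo n; have Hm := ltn_pmod lo Hn.
set q := lo %/ n in Hdq; set m := lo %% n in Hdq Hm.
case: (leqP m k) => H.
  exists (q * n + k); split; first by lia.
  by rewrite modnMDl modn_small.
exists (q.+1 * n + k); split; first by rewrite mulSn; lia.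
by rewrite modnMDl modn_small.
Qed.

Lemma window_closed n a b : 0 < n -> a <= b -> n.+2 <= b - a -> b - a <= 3 * n -> b <= 4 * n + 2 ->
  forall k, k < n -> exists d1 d2, [/\ d1 < 4 * n, d2 < 4 * n, d1 %% n = k, d2 %% n = k &
      ((a <= d1.+1) && (d1.+1 < b)) && ~~ ((a <= d2.+1) && (d2.+1 < b))].
Proof.
move=> Hn Hab Hlo Hhi Hb k Hk.
have [d1 [Hd1 R1]] := res_in_range a.-1 Hn Hk.
have R3 : (3 * n + k) %% n = k by rewrite modnMDl modn_small.
case: (boolP ((a <= k.+1) && (k.+1 < b))) => Hin.
  exists d1, (3 * n + k); split => //; try lia.
exists d1, k; split => //; try lia.
by rewrite modn_small.
Qed.

Lemma window_open n a : 0 < n -> n < a -> a <= 3 * n + 1 ->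
  forall k, k < n -> exists d1 d2, [/\ d1 < 4 * n, d2 < 4 * n, d1 %% n = k, d2 %% n = k &
      ((a <= d1.+1) && (d1.+1 < 4 * n + 2)) && ~~ ((a <= d2.+1) && (d2.+1 < 4 * n + 2))].
Proof.
move=> Hn Ha1 Ha2 k Hk.
exists (3 * n + k), k; split; try lia.
  by rewrite modnMDl modn_small.
by rewrite modn_small.
Qed.
Section Main.
Variables (n : nat) (M : dpda bool).
Hypothesis n4 : 4 <= n.
Hypothesis Hacc : forall x, posL n x -> dpda_accepts M x.
Hypothesis Hrej : forall x, negL n x -> dpda_rejects M x.
Local Notation run := (@pd_run bool M).
Local Notation e := (pd_e M).
Local Notation ng := (pd_ng M).
Local Notation nq := (pd_nq M).

Definition Xt (w : seq bool) := tape (xw w).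
Definition C0 (w : seq bool) : pd_config M := pd_init M (xw w).
Definition NN := (4 * n).+3.
Definition Gt := ('I_e.+1 * e.-tuple 'I_ng)%type.
Definition gseq (g : Gt) : seq 'I_ng := take g.1 g.2.
Definition SigT := (('I_NN * 'I_NN * 'I_nq * 'I_nq * Gt * Gt) + ('I_NN * 'I_nq * Gt))%type.

Definition GoodC (w : seq bool) (a b : nat) (q1 q2 : 'I_nq) (al ga : seq 'I_ng) : Prop :=
  exists r k1 k2 (be : seq 'I_ng) (cf : pd_config M),
   [/\ run r (C0 w) = Some (q1, drop a (Xt w), al ++ be),
       run k1 (q1, take (b - a) (drop a (Xt w)), al) = Some (q2, [::], ga),
       run k2 (q2, drop b (Xt w), ga ++ be) = Some cf & pd_rej M cf.1.1].

Definition GoodO (w : seq bool) (a : nat) (q1 : 'I_nq) (al : seq 'I_ng) : Prop :=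
  exists r k (be : seq 'I_ng) (cf : pd_config M),
   [/\ run r (C0 w) = Some (q1, drop a (Xt w), al ++ be),
       run k (q1, drop a (Xt w), al) = Some cf & pd_rej M cf.1.1].

Definition GoodSig (w : seq bool) (s : SigT) : Prop :=
  match s with
  | inl (a, b, q1, q2, g1, g2) =>
      [/\ (a <= b)%N, n.+2 <= b - a, b - a <= 3 * n & GoodC w a b q1 q2 (gseq g1) (gseq g2)]
  | inr (a, q1, g) => [/\ n < a, a <= 3 * n + 1 & GoodO w a q1 (gseq g)]
  end.

Lemma size_Xt w : size w = n -> size (Xt w) = 4 * n + 2.
Proof. by move=> Hw; rewrite /Xt size_tape size_xw Hw addn2. Qed.

Lemma run_init_contra (y : seq bool) k (cf : pd_config M) :
  run k (pd_init M y) = Some cf -> pd_rej M cf.1.1 -> posL n y -> False.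
Proof.
move=> H R Hy; have [k2 [c2 [H2 A2]]] := Hacc Hy.
exact: run_acc_rej H R H2 A2.
Qed.

Lemma good_inj w w' s : size w = n -> size w' = n -> GoodSig w s -> GoodSig w' s -> w = w'.
Proof.
move=> Hw Hw' G1 G2; case: (eqVneq w w') => // Hne; exfalso; move: G1 G2.
have Hn : 0 < n by lia.
have HX := size_Xt Hw; have HX' := size_Xt Hw'.
have Hs : size (xw w) = size (xw w') by rewrite !size_xw Hw Hw'.
case: s => [[[[[[a b] q1] q2] g1] g2]|[[a q1] g]] /=.
- move=> [Hab Hlo Hhi [r [k1 [k2 [be [cf [H1 H2 H3 H4]]]]]]].
  move=> [_ _ _ [r' [k1' [k2' [be' [cf' [H1' H2' H3' H4']]]]]]].
  have Hb : (b : nat) <= 4 * n + 2 by have := ltn_ord b; rewrite /NN; lia.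
  have Hb2 : (b : nat) <= (size (xw w)).+2 by rewrite size_xw Hw; lia.
  have Hy := tape_hyb Hs Hab Hb2.
  have Hpos := hyb_pos Hw Hw' Hne (window_closed Hn Hab Hlo Hhi Hb).
  have R1 : run r (pd_q0 M, take a (Xt w) ++ (take (b - a) (drop a (Xt w')) ++ drop b (Xt w)),
                   [:: pd_z0 M]) = Some (q1, take (b - a) (drop a (Xt w')) ++ drop b (Xt w), gseq g1 ++ be).
    by apply: (run_prefix (rest := drop a (Xt w))); rewrite cat_take_drop; exact: H1.
  have R2 := run_frame (drop b (Xt w)) be H2'.
  have Hrun : run (r + (k1' + k2)) (pd_init M (hyb (xw w) (xw w') a b)) = Some cf.
    by rewrite /pd_init -Hy run_add R1 /= run_add R2 /= H3.
  exact: run_init_contra Hrun H4 Hpos.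
- move=> [Ha1 Ha2 [r [k [be [cf [H1 H2 H3]]]]]] [_ _ [r' [k' [be' [[[qf tf] sf] [H1' H2' H3']]]]]].
  have Ha : (a : nat) <= 4 * n + 2 by lia.
  have Hb2 : 4 * n + 2 <= (size (xw w)).+2 by rewrite size_xw Hw; lia.
  have Hy := tape_hyb Hs Ha Hb2.
  rewrite [drop (4 * n + 2) _]drop_oversize ?cats0 in Hy; last by rewrite size_tape size_xw Hw; lia.
  rewrite [take (4 * n + 2 - a) _]take_oversize in Hy; last by rewrite size_drop size_tape size_xw Hw'; lia.
  have Hpos := hyb_pos Hw Hw' Hne (window_open Hn Ha1 Ha2).
  have R1 : run r (pd_q0 M, take a (Xt w) ++ drop a (Xt w'), [:: pd_z0 M]) =
            Some (q1, drop a (Xt w'), gseq g ++ be).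
    by apply: (run_prefix (rest := drop a (Xt w))); rewrite cat_take_drop; exact: H1.
  have R2 := run_frame [::] be H2'; rewrite !cats0 in R2.
  have Hrun : run (r + k') (pd_init M (hyb (xw w) (xw w') a (4 * n + 2))) = Some (qf, tf, sf ++ be).
    by rewrite /pd_init -Hy run_add /Xt R1 /= R2.
  exact: run_init_contra Hrun H3' Hpos.
Qed.


Lemma gseq_mk (al : seq 'I_ng) : size al <= e -> exists g : Gt, gseq g = al.
Proof.
move=> Hal.
have Hs : size (take e (al ++ nseq e (pd_z0 M))) == e.
  by rewrite size_takel // size_cat size_nseq leq_addl.
exists (Ordinal (Hal : size al < e.+1), Tuple Hs).
by rewrite /gseq /= take_takel // take_size_cat.
Qed.

Lemma sig_exists (w : seq bool) : size w = n -> exists s : SigT, GoodSig w s.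
Proof.
move=> Hw.
have HX := size_Xt Hw.
have [T [cf [HT Hrj]]] : dpda_rejects M (xw w) by apply: Hrej; exists w.
have HT' : run T (C0 w) = Some cf := HT.
set C := C0 w in HT'.
have hpos := ht_pos HT'. have hup := ht_up HT'. have hdown := ht_down HT'.
have Pup := Pt_up HT'. have P0 : Pt C 0 = 0 := Pt0 C. have h0 : ht C 0 = 1 by [].
have Hsz0 : size C.1.2 = 4 * n + 2 by exact: HX.
have Hcfg : forall t, t <= T -> exists q s, cfgt C t = (q, drop (Pt C t) (Xt w), s) /\ size s = ht C t.
  move=> t Ht; have := tape_drop HT' Ht; rewrite /ht.
  by case: (cfgt C t) => [[q tp] s] /= ->; exists q, s.
have Hn : 0 < n by lia.
case: (comb_main hpos hup hdown Pup P0 h0 n4) => [Hearly|[Hopen|Hclosed]].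
- exfalso.
  set a := Pt C T in Hearly.
  have [qf [sf [Ecf _]]] := Hcfg T (leqnn T).
  have HTc : run T (pd_q0 M, take a (Xt w) ++ drop a (Xt w), [:: pd_z0 M]) =
             Some (qf, drop a (Xt w), sf).
    by rewrite cat_take_drop -Ecf; exact: (cfgtE HT' (leqnn T)).
  have Eqf : cf.1.1 = qf by rewrite -(cfgtT HT') Ecf.
  set wb := map negb w.
  have Hwb : size wb = n by rewrite size_map.
  have Hne : w != wb.
    apply/eqP => E; have := congr1 (fun s => nth false s 0) E.
    by rewrite /wb (nth_map false) ?Hw //; case: (nth false w 0).
  have Hs : size (xw w) = size (xw wb) by rewrite !size_xw Hw Hwb.
  have Hb2 : 4 * n + 2 <= (size (xw w)).+2 by rewrite size_xw Hw; lia.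
  have H31 : 3 * n + 1 <= 4 * n + 2 by lia.
  have Hy := tape_hyb Hs H31 Hb2.
  have Hpos := hyb_pos Hw Hwb Hne (window_open (a := 3 * n + 1) Hn ltac:(lia) (leqnn _)).
  have Ety : tape (hyb (xw w) (xw wb) (3 * n + 1) (4 * n + 2)) =
             take a (Xt w) ++ drop a (tape (hyb (xw w) (xw wb) (3 * n + 1) (4 * n + 2))).
    rewrite -{1}(cat_take_drop a (tape _)); congr (_ ++ _).
    rewrite -Hy takel_cat ?take_takel //; first lia.
    by rewrite size_takel ?size_tape ?size_xw ?Hw; lia.
  have := run_prefix (drop a (tape (hyb (xw w) (xw wb) (3 * n + 1) (4 * n + 2)))) HTc.
  rewrite -Ety => Hrun.
  apply: (run_init_contra Hrun) => //=.
  by rewrite -Eqf.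
- have [rho [HrT Hrho Hmin]] := Hopen.
  set a := Pt C rho in Hrho.
  have HPT : Pt C rho <= Pt C T := Pmono Pup P0 h0 n4 HrT (leqnn T).
  have HT2 := Pt_leT HT' (leqnn T).
  have e1 : 0 < e.
    have := hup 0 ltac:(lia); have := hpos 1 ltac:(lia); rewrite h0; lia.
  have [q1 [s [Er Hs]]] := Hcfg rho HrT.
  set L := (size s).-1.
  set al := take (size s - L) s.
  set be := drop (size s - L) s.
  have Hal : size al <= e by rewrite /al size_take_min; lia.
  have [g Hg] := gseq_mk Hal.
  have Ha : a < NN by rewrite /NN; lia.
  exists (inr (Ordinal Ha, q1, g)); rewrite /= Hg; split; try lia.
  have Hseg : run (T - rho) (q1, drop a (Xt w) ++ [::], al ++ be) = Some (cfgt C T).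
    by rewrite cats0 /al /be cat_take_drop -Er; exact (seg_run HT' HrT (leqnn T)).
  have [] := run_unframe (u := drop a (Xt w)) (rest := [::]) (s := al) (beta := be) Hseg.
  + move=> i c' Hi Hc'.
    rewrite cats0 /al /be cat_take_drop -Er in Hc'.
    have Hri : rho + i <= T by lia.
    rewrite (seg_mid HT' Hri Hc').
    have := Hmin (rho + i); have := hpos rho ltac:(lia).
    rewrite /be size_drop -/(ht C (rho + i)) -Hs; lia.
  + by [].
  move=> u' [s' [Ec Hloc]].
  exists rho, (T - rho), be, ((cfgt C T).1.1, u', s'); split => //.
    by rewrite /al /be cat_take_drop -Er; exact (cfgtE HT' HrT).
  by rewrite /= (cfgtT HT').
- have [r [t [Hrt HtT Hg Hsz]]] := Hclosed.
  have Ht : t <= T := ltnW HtT.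
  have Hr : r <= T := leq_trans Hrt Ht.
  have [mu [Hmu Hminm _]] := first_min (h := ht C) P0 h0 n4 Hrt.
  have Hm1 : 0 < ht C mu by apply: hpos; lia.
  set L := (ht C mu).-1.
  set a := Pt C r in Hsz. set b := Pt C t in Hsz.
  have Hab : a <= b by lia.
  have Hb : b <= 4 * n + 2 by rewrite -Hsz0; exact: Pt_le.
  have [q1 [sr [Er Hsr]]] := Hcfg r Hr.
  have [q2 [st [Et Hst]]] := Hcfg t Ht.
  have [G1 G2] := Hg mu Hmu.
  have Hmr := Hminm r ltac:(lia). have Hmt := Hminm t ltac:(lia).
  set al := take (size sr - L) sr.
  set be := drop (size sr - L) sr.
  have Hbe : size be = L by rewrite /be size_drop; lia.
  have Hal : size al <= e by rewrite /al size_take_min; lia.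
  have Edrop : drop a (Xt w) = take (b - a) (drop a (Xt w)) ++ drop b (Xt w).
    by rewrite -{1}(cat_take_drop (b - a) (drop a (Xt w))) drop_drop subnK.
  have Hseg : run (t - r) (q1, take (b - a) (drop a (Xt w)) ++ drop b (Xt w), al ++ be) =
              Some (cfgt C t).
    by rewrite -Edrop /al /be cat_take_drop -Er; exact (seg_run HT' Hrt Ht).
  have [] := run_unframe (u := take (b - a) (drop a (Xt w))) (rest := drop b (Xt w))
                         (s := al) (beta := be) Hseg.
  + move=> i c' Hi Hc'.
    rewrite -Edrop /al /be cat_take_drop -Er in Hc'.
    have Hri : r + i <= T by lia.
    rewrite (seg_mid HT' Hri Hc') Hbe.
    have := Hminm (r + i) ltac:(lia).
    rewrite -/(ht C (r + i)); lia.
  + by rewrite Et.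
  move=> u' [s' [Ec Hloc]].
  have E2 := Ec; rewrite Et in E2; case: E2 => Eu Es.
  have Eu' : u' = [::].
    by move: (congr1 size Eu); rewrite size_cat -/b; case: (u') => //= x l; lia.
  subst u'.
  have Hga : size s' <= e.
    by move: (congr1 size Es); rewrite size_cat Hbe Hst => Hss; lia.
  have [g1 Hg1] := gseq_mk Hal.
  have [g2 Hg2] := gseq_mk Hga.
  have Ha' : a < NN by rewrite /NN; lia.
  have Hb' : b < NN by rewrite /NN; lia.
  exists (inl (Ordinal Ha', Ordinal Hb', q1, q2, g1, g2)); rewrite /= Hg1 Hg2.
  split; try lia.
  exists r, (t - r), (T - t), be, cf; split => //.
  + by rewrite /al /be cat_take_drop -Er; exact (cfgtE HT' Hr).
  + by rewrite Et /= in Hloc.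
  + by have := seg_run HT' Ht (leqnn T); rewrite Et Es (cfgtT HT').
Qed.

Definition bnd := 2 * (NN * NN * (pd_ssc M * pd_ssc M * pd_ssc M * pd_ssc M * pd_ssc M * pd_ssc M)).

Lemma card_SigT : #|{: SigT}| <= bnd.
Proof.
rewrite card_sum !card_prod card_tuple !card_ord /bnd.
set S := pd_ssc M.
have ng0 : 0 < ng by case: (pd_z0 M) => z Hz; lia.
have Hq : nq <= S by rewrite /S /pd_ssc leq_addr.
have Hs1 : e.+1 <= \sum_(i < e.+1) ng ^ i.
  have : \sum_(i < e.+1) 1 <= \sum_(i < e.+1) ng ^ i.
    by apply: leq_sum => i _; rewrite expn_gt0 ng0.
  by rewrite sum1_card card_ord.
have Hs2 : ng ^ e <= \sum_(i < e.+1) ng ^ i by rewrite big_ord_recr /= leq_addl.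
have HS1 : e.+1 <= S by apply: leq_trans Hs1 _; rewrite /S /pd_ssc leq_addl.
have HS2 : ng ^ e <= S by apply: leq_trans Hs2 _; rewrite /S /pd_ssc leq_addl.
set G := e.+1 * ng ^ e.
have HG : G <= S * S by apply: leq_mul.
have S1 : 1 <= S by lia.
have N1 : 1 <= NN by [].
have A1 : NN * NN * nq * nq * G * G <= NN * NN * S * S * (S * S) * (S * S).
  by repeat apply: leq_mul => //.
have A2a : NN * nq * G <= NN * S * (S * S) by apply: leq_mul => //; apply: leq_mul.
have P1 : 0 < NN * S * (S * S) by rewrite !muln_gt0 S1.
have A2b : NN * S * (S * S) * 1 <= NN * S * (S * S) * (NN * S * (S * S)).
  by rewrite leq_mul2l P1 orbT.
have E1 : NN * NN * S * S * (S * S) * (S * S) = NN * NN * (S * S * S * S * S * S) by lia.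
have E2 : NN * S * (S * S) * (NN * S * (S * S)) = NN * NN * (S * S * S * S * S * S) by lia.
lia.
Qed.


Lemma main_bound : 2 ^ n <= bnd.
Proof.
pose f (w : n.-tuple bool) : SigT :=
  proj1_sig (constructive_indefinite_description _ (sig_exists (size_tuple w))).
have Hf : forall w : n.-tuple bool, GoodSig w (f w) :=
  fun w => proj2_sig (constructive_indefinite_description _ (sig_exists (size_tuple w))).
have inj_f : injective f.
  move=> w1 w2 E; apply: val_inj.
  apply: (good_inj (size_tuple w1) (size_tuple w2) (Hf w1)).
  by rewrite E; apply: Hf.
have := leq_card f inj_f; rewrite card_tuple card_bool => H.
exact: leq_trans H card_SigT.
Qed.

End Main.
Lemma dec_half c (b : bool) : ((2 + 2 * c + b) - 2)./2 = c.
Proof. have -> : (2 + 2 * c + b) - 2 = b + c.*2 by rewrite -mul2n; lia. exact: half_bit_double. Qed.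
Lemma dec_odd c (b : bool) : odd (2 + 2 * c + b) = b.
Proof. by rewrite oddD oddD oddM /=; case: b. Qed.
Lemma modS_mod m n : (m %% n).+1 %% n = m.+1 %% n.
Proof. by rewrite -addn1 modnDml addn1. Qed.

Section NFA.
Variable n : nat.
Definition ntrans (q : 'I_(n + n).+2) (a : tsym bool) (q' : 'I_(n + n).+2) : bool :=
  match a with
  | Cent => ((val q == 0) && (val q' == 0)) || ((val q == 1) && (val q' == 1))
  | Dollar => (val q == 1) && (val q' == 1)
  | Sym s => [|| (val q == 0) && (val q' == 0),
                 (val q == 0) && (val q' == 2 + s),
                 (val q == 1) && (val q' == 1),
                 (1 < val q) && (val q' == 2 + 2 * (((val q - 2)./2).+1 %% n) + odd (val q))
               | [&& 1 < val q, (((val q - 2)./2).+1 %% n == 0), s != odd (val q) & (val q' == 1)]]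
  end.

Definition NfaN : nfa bool := @Nfa bool (n + n).+2 ord0 (fun q => val q == 1) ntrans.

Local Notation next := (@nfa_next bool NfaN).

Lemma next_in (X : {set 'I_(n + n).+2}) q a q' : q \in X -> ntrans q a q' -> q' \in next X a.
Proof. by move=> Hq Ht; rewrite inE; apply/existsP; exists q; apply/andP; split. Qed.

Lemma next_inv (X : {set 'I_(n + n).+2}) a q' : q' \in next X a -> exists2 q, q \in X & ntrans q a q'.
Proof. by rewrite inE => /existsP [q /andP [Hq Ht]]; exists q. Qed.

Definition R0 := next [set ord0] Cent.

Lemma foldl_take (x : seq bool) l (X : {set 'I_(n + n).+2}) : l < size x ->
  foldl next X (map (@Sym bool) (take l.+1 x)) = next (foldl next X (map (@Sym bool) (take l x))) (Sym (nth false x l)).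
Proof. by move=> H; rewrite (take_nth false H) map_rcons foldl_rcons. Qed.

Lemma foldl_tape (x : seq bool) :
  foldl next [set ord0] (tape x) = next (foldl next R0 (map (@Sym bool) x)) Dollar.
Proof. by rewrite /tape /= foldl_cat. Qed.

Lemma keep1 (X : {set 'I_(n + n).+2}) s : (inord 1 : 'I_(n + n).+2) \in X ->
  (inord 1 : 'I_(n + n).+2) \in foldl next X s.
Proof.
elim: s X => [|a s IH] X H //=; apply: IH; apply: (next_in H).
by case: a => [||b] /=; rewrite inordK //; rewrite ?eqxx ?orbT.
Qed.

Lemma nfa_acc x : posL n x -> nfa_accepts NfaN x.
Proof.
move=> [i [j [Hij Hj Hd Hne]]].
have Hn : 0 < n by case: n Hd => [|m] //; rewrite dvd0n; lia.
have HA : forall l, l <= i -> (ord0 : 'I_(n + n).+2) \in foldl next R0 (map (@Sym bool) (take l x)).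
  elim => [|l IH] Hl.
    by rewrite take0 /=; apply: (next_in (q := ord0)); rewrite ?inE //= ?eqxx.
  rewrite foldl_take; last lia.
  by apply: (next_in (IH (ltnW Hl))); rewrite /= ?eqxx.
pose st l := 2 + 2 * ((l - i.+1) %% n) + nth false x i.
have Hst : forall l, st l < (n + n).+2.
  by move=> l; have := ltn_pmod (l - i.+1) Hn; rewrite /st; case: (nth false x i); lia.
have HC : forall l, i < l <= j -> (inord (st l) : 'I_(n + n).+2) \in foldl next R0 (map (@Sym bool) (take l x)).
  elim => [|l IH] Hl; first lia.
  rewrite foldl_take; last lia.
  case: (eqVneq l i) => Eli.
    subst l; apply: (next_in (HA i (leqnn i))).
    by rewrite /= !inordK // /st subnn mod0n; rewrite ?eqxx ?orbT //; case: (nth false x i).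
  apply: (next_in (IH ltac:(lia))).
  rewrite /= !inordK // /st dec_half dec_odd modS_mod.
  have -> : (l - i.+1).+1 = l.+1 - i.+1 by lia.
  have H1 : 1 < 2 + 2 * ((l - i.+1) %% n) + nth false x i by lia.
  by rewrite eqxx H1 /= ?orbT.
have HD : (inord 1 : 'I_(n + n).+2) \in foldl next R0 (map (@Sym bool) (take j.+1 x)).
  rewrite foldl_take //.
  apply: (next_in (HC j ltac:(lia))).
  rewrite /= !inordK // /st dec_half dec_odd modS_mod.
  have -> : (j - i.+1).+1 = j - i by lia.
  have -> : (j - i) %% n == 0 by [].
  have H1 : 1 < 2 + 2 * ((j - i.+1) %% n) + nth false x i by lia.
  have Hne' : nth false x j != nth false x i by rewrite eq_sym.
  by rewrite H1 Hne' /= ?orbT.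
rewrite /nfa_accepts; exists (inord 1); last by rewrite /= inordK.
rewrite foldl_tape -(cat_take_drop j.+1 x) map_cat foldl_cat.
apply: (next_in (q := inord 1)); first by apply: keep1.
by rewrite /= inordK // eqxx.
Qed.

Lemma nfa_rej x : negL n x -> nfa_rejects NfaN x.
Proof.
move=> [w [Hw Ex]].
pose Inv l (X : {set 'I_(n + n).+2}) := forall q, q \in X -> val q = 0 \/
  (1 < val q /\ exists2 i, i < l & nth false x i = odd (val q) /\ (val q - 2)./2 = (l - i.+1) %% n).
have Hsx : size x = 4 * n by rewrite Ex size_xw Hw.
have H0 : Inv 0 R0.
  move=> q /next_inv [q0]; rewrite inE => /eqP -> /=.
  by rewrite orbF => /eqP ->; left.
have HS : forall l, l <= size x -> Inv l (foldl next R0 (map (@Sym bool) (take l x))).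
  elim => [|l IH] Hl; first by rewrite take0.
  rewrite foldl_take; last lia.
  move=> q' /next_inv [q Hq Ht].
  case: (IH (ltnW Hl) q Hq) => [Eq|[Hq1 [i Hi [Hxi Hc]]]].
    move: Ht; rewrite /= Eq /=.
    rewrite orbF => /orP [/eqP ->|/eqP Eq']; first by left.
    right; rewrite Eq'; split; first by case: (nth false x l).
    exists l => //; split.
      by rewrite -[_ + _]add0n -(muln0 2) addnA dec_odd.
    rewrite subnn mod0n.
    by have := dec_half 0 (nth false x l); rewrite muln0 addn0.
  move: Ht; rewrite /=.
  have -> : (val q == 0) = false by apply/eqP; lia.
  have -> : (val q == 1) = false by apply/eqP; lia.
  rewrite Hq1 /=.
  move=> /orP [/eqP Eq'|/and3P [Hm Hs /eqP Eq']].
    right; rewrite Eq'; split; first lia.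
    exists i; first lia.
    rewrite dec_half dec_odd; split => //.
    rewrite Hc modS_mod.
    by have -> : (l - i.+1).+1 = l.+1 - i.+1 by lia.
  exfalso; move: Hs; rewrite -Hxi.
  have Hper : nth false x l = nth false x i.
    rewrite Ex !nth_xw ?Hw; try lia.
    have : (l == i %[mod n]).
      rewrite eqn_mod_dvd; last lia.
      rewrite Hc modS_mod in Hm.
      have E : (l - i.+1).+1 = l - i by lia.
      by rewrite E in Hm.
    by move/eqP => ->.
  by rewrite Hper eqxx.
move=> [q Hq Hfin].
rewrite foldl_tape in Hq.
have [q0 Hq0 Ht] := next_inv Hq.
have := HS (size x) (leqnn _) q0; rewrite take_size => /(_ Hq0).
move: Ht; rewrite /= => /andP [/eqP -> _].
by case => //; lia.
Qed.

End NFA.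

Lemma in1N_Lfam : in_1N Lfam.
Proof.
exists 2, NfaN => n; split.
  by rewrite /=; nia.
split; [exact: nfa_acc | exact: nfa_rej].
Qed.

Lemma sq_le_pow j : 4 <= j -> j * j <= 2 ^ j.
Proof.
elim: j => // j IH Hj.
case: (eqVneq j 3) => [->|Hj3] //.
have Hj' : 4 <= j by lia.
have := IH Hj'; rewrite expnS; nia.
Qed.

Lemma final_arith c S :
  S <= c * ((2 ^ (6 * c + 16)).-1).+1 ^ c ->
  2 ^ (2 ^ (6 * c + 16)).-1 <=
    2 * ((4 * (2 ^ (6 * c + 16)).-1).+3 * (4 * (2 ^ (6 * c + 16)).-1).+3 *
         (S * S * S * S * S * S)) -> False.
Proof.
set j := 6 * c + 16.
have HX : ((2 ^ j).-1).+1 = 2 ^ j by rewrite prednK // expn_gt0.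
rewrite HX.
set X := 2 ^ j.
have Hj : j < X := ltn_expl j (isT : 1 < 2).
have Hc : c <= X by rewrite /j in Hj; lia.
move=> HS Hb.
have HS' : S <= X ^ c.+1 by rewrite expnS; apply: leq_trans HS _; apply: leq_mul.
have HN : (4 * X.-1).+3 <= X * X by nia.
have H6 : S * S * S * S * S * S <= X ^ c.+1 * X ^ c.+1 * X ^ c.+1 * X ^ c.+1 * X ^ c.+1 * X ^ c.+1.
  by repeat apply: leq_mul.
have H2 : (4 * X.-1).+3 * (4 * X.-1).+3 <= X * X * (X * X) by apply: leq_mul.
have HP : X * X * (X * X) * (X ^ c.+1 * X ^ c.+1 * X ^ c.+1 * X ^ c.+1 * X ^ c.+1 * X ^ c.+1)
          = 2 ^ (j * (6 * c + 10)).
  rewrite /X -!expnM -!expnD; congr (2 ^ _); lia.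
have Hb2 : 2 ^ X.-1 <= 2 ^ (j * (6 * c + 10)).+1.
  apply: (leq_trans Hb); rewrite expnS -HP leq_mul2l /=.
  exact: leq_mul H2 H6.
rewrite leq_exp2l // in Hb2.
have Hsq := sq_le_pow (_ : 4 <= j).
have := Hsq ltac:(rewrite /j; lia).
rewrite -/X /j in Hb2 *; lia.
Qed.

Theorem proposition5p2 :
  exists (Sigma : finType) (L : nat -> promise Sigma),
    (forall n, promise_disjoint (L n)) /\ in_1N L /\ ~ in_1DPD L.
Proof.
exists bool, Lfam; split; first exact: Lfam_disj.
split; first exact: in1N_Lfam.
move=> [c [Mf HM]].
have [Hs [Ha Hr]] := HM (2 ^ (6 * c + 16)).-1.
have n4 : 4 <= (2 ^ (6 * c + 16)).-1.
  have := ltn_expl (6 * c + 16) (isT : 1 < 2); lia.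
have := main_bound n4 Ha Hr; rewrite /bnd /NN.
exact: final_arith Hs.
Qed.
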